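(* Let $\mathbf{A}$ be a finite algebra with $|A|>1$. Then for every integer $n>0$, \[ \lceil \log_{|A|}(n) \rceil\leq d_{\mathbf{A}}(n) \leq |A|^n \qquad\text{and}\qquad \lfloor \log_{|A|}(n) \rfloor\leq h_{\mathbf{A}}(n) \leq |A|^n . \] Hence $d_{\mathbf{A}}(n), h_{\mathbf{A}}(n)\in \Omega(\log(n))\cap 2^{O(n)}$. Moreover: (1) $d_{\mathbf{A}}(n) \in O(\log(n))$ if and only if $h_{\mathbf{A}}(n) \in 2^{\Omega(n)}$; (2) $d_{\mathbf{A}}(n) \in O(n)$ if and only if $h_{\mathbf{A}}(n) \in \Omega(n)$, and $d_{\mathbf{A}}(n) \in \Omega(n)$ if and only if $h_{\mathbf{A}}(n) \in O(n)$; (3) $d_{\mathbf{A}}(n) \in 2^{\Omega(n)}$ if and only if $h_{\mathbf{A}}(n) \in O(\log(n))$.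
   Context: For an algebra $\mathbf{A}$ and $n\in\omega=\{0,1,2,\dots\}$, $d_{\mathbf{A}}(n)$ denotes the least size of a generating set of the direct power $\mathbf{A}^n$ (the value is $\omega$ if $\mathbf{A}^n$ is not finitely generated), and $h_{\mathbf{A}}(g)$ denotes the largest $n$ such that $\mathbf{A}^n$ is generated by $g$ elements. Thus $d_{\mathbf{A}}(n)\le g$ iff $n\le h_{\mathbf{A}}(g)$. Big-O notation: $f\in O(g)$ means $|f(x)|\le M|g(x)|$ for some positive constants $M,N$ and all $x>N$; $f\in\Omega(g)$ means $|f(x)|\ge M|g(x)|$ for all $x>N$; $f\in 2^{O(n)}$ (resp. $2^{\Omega(n)}$) means $f(n)=2^{g(n)}$ with $g\in O(n)$ (resp. $g\in\Omega(n)$). *)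

(* Defs.v *)
From Stdlib Require Import Reals ClassicalEpsilon.
From mathcomp Require Import all_boot.

Set Implicit Arguments.
Unset Strict Implicit.
Unset Printing Implicit Defensive.

Section Alg.
Variables (A : finType) (F : Type) (ar : F -> nat)
          (ops : forall f : F, ('I_(ar f) -> A) -> A).

(* Subuniverse of the direct power A^n generated by S (operations act
   coordinatewise). *)
Inductive generated (n : nat) (S : {ffun 'I_n -> A} -> Prop)
  : {ffun 'I_n -> A} -> Prop :=
| gen_base x : S x -> generated S x
| gen_op (f : F) (xs : 'I_(ar f) -> {ffun 'I_n -> A}) :
    (forall i, generated S (xs i)) ->
    generated S [ffun j => @ops f (fun i => xs i j)].

Definition generates (n : nat) (S : {ffun 'I_n -> A} -> Prop) : Prop :=
  forall x, generated S x.

(* A^n is generated by (at most) g elements. *)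
Definition power_gen_by (n g : nat) : Prop :=
  exists gens : 'I_g -> {ffun 'I_n -> A},
    generates (fun x => exists i, gens i = x).

Definition d_A (n : nat) : nat :=
  epsilon (inhabits 0%N)
    (fun g => power_gen_by n g /\ forall g', power_gen_by n g' -> (g <= g')%N).

Definition h_A (g : nat) : nat :=
  epsilon (inhabits 0%N)
    (fun n => power_gen_by n g /\ forall n', power_gen_by n' g -> (n' <= n)%N).
End Alg.

Local Open Scope R_scope.

Definition natR (f : nat -> nat) : nat -> R := fun n => INR (f n).
Definition logR : nat -> R := fun n => ln (INR n).
Definition idR : nat -> R := fun n => INR n.

Definition bigO (f g : nat -> R) : Prop :=
  exists M N : R, 0 < M /\ 0 < N /\
    forall x : nat, N < INR x -> Rabs (f x) <= M * Rabs (g x).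

Definition bigOmega (f g : nat -> R) : Prop :=
  exists M N : R, 0 < M /\ 0 < N /\
    forall x : nat, N < INR x -> Rabs (f x) >= M * Rabs (g x).

Definition exp_bigO (f : nat -> R) : Prop :=
  exists g : nat -> R, bigO g idR /\
    exists N : R, 0 < N /\ forall x : nat, N < INR x -> f x = Rpower 2 (g x).

Definition exp_bigOmega (f : nat -> R) : Prop :=
  exists g : nat -> R, bigOmega g idR /\
    exists N : R, 0 < N /\ forall x : nat, N < INR x -> f x = Rpower 2 (g x).

(* Main.v *)
Require Import Defs.
From Stdlib Require Import Reals Lra ClassicalEpsilon Classical FunctionalExtensionality.
From mathcomp Require Import all_boot.

Set Implicit Arguments.
Unset Strict Implicit.
Unset Printing Implicit Defensive.

Lemma least_ex (Q : nat -> Prop) n : Q n -> exists m, Q m /\ forall k, Q k -> (m <= k)%N.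
Proof.
elim: n {-2}n (leqnn n) => [|N IH] n le_nN Qn.
  exists n; split=> // k _; by rewrite leqn0 in le_nN; rewrite (eqP le_nN).
case: (classic (exists k, (k < n)%N /\ Q k)) => [[k [lt_kn Qk]]|nok].
  apply: (IH k) => //; by rewrite -ltnS (leq_trans lt_kn).
exists n; split=> // k Qk; rewrite leqNgt; apply/negP => lt_kn.
by apply: nok; exists k.
Qed.

Lemma max_ex (Q : nat -> Prop) B n : Q n -> (forall k, Q k -> (k <= B)%N) ->
  exists m, Q m /\ forall k, Q k -> (k <= m)%N.
Proof.
move=> Qn QB.
have [m [Um Mm]] := @least_ex (fun m => forall k, Q k -> (k <= m)%N) B QB.
exists m; split=> //.
case: (classic (Q m)) => // nQm; exfalso.
case: m Um Mm nQm => [|m] Um Mm nQm.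
  by have := Um n Qn; rewrite leqn0 => /eqP e; apply: nQm; rewrite -e.
have : (m.+1 <= m)%N; last by rewrite ltnn.
apply: Mm => k Qk; have := Um k Qk; rewrite leq_eqVlt => /orP [/eqP e|//].
by exfalso; apply: nQm; rewrite -e.
Qed.

Section AlgS.
Variables (A : finType) (F : Type) (ar : F -> nat)
          (ops : forall f : F, ('I_(ar f) -> A) -> A).
Variable a0 : A.

Lemma gen_mono n (S S' : {ffun 'I_n -> A} -> Prop) x :
  (forall y, S y -> S' y) -> generated ops S x -> generated ops S' x.
Proof.
move=> SS' ; elim => [y Sy|f xs _ IH]; first by apply: gen_base; apply: SS'.
exact: gen_op.
Qed.

Lemma pg_card n g : (1 < #|A|)%N -> power_gen_by ops n g -> (n <= #|A| ^ g)%N.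
Proof.
move=> /card_gt1P [b0 [b1 [_ _ nb]]] [gens Hg].
pose row (j : 'I_n) : {ffun 'I_g -> A} := [ffun i => gens i j].
have inj_row : injective row.
  move=> j1 j2 e; apply/eqP; apply/negP => /negP nj.
  have key : forall x, generated ops (fun x => exists i, gens i = x) x -> x j1 = x j2.
    move=> x; elim => [y [i <-]|f xs _ IH].
      by have := congr1 (fun r : {ffun 'I_g -> A} => r i) e; rewrite /row !ffunE.
    rewrite !ffunE; congr (ops _); apply: functional_extensionality => i; exact: IH.
  have := key _ (Hg [ffun j => if j == j1 then b0 else b1]).
  have nj' : (j2 == j1) = false by apply/negbTE; rewrite eq_sym.
  rewrite !ffunE eqxx nj' => eb; by move: nb; rewrite eb eqxx.
have := leq_card row inj_row; by rewrite card_ord card_ffun card_ord.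
Qed.

Lemma pg_all n g : (#|A| ^ n <= g)%N -> power_gen_by ops n g.
Proof.
move=> le; pose x0 : {ffun 'I_n -> A} := [ffun _ => a0].
exists (fun i => nth x0 (enum {ffun 'I_n -> A}) i) => x; apply: gen_base.
have lt : (index x (enum {ffun 'I_n -> A}) < g)%N.
  have ec : #|{ffun 'I_n -> A}| = (#|A| ^ n)%N by rewrite card_ffun card_ord.
  apply: leq_trans le; rewrite -ec cardE index_mem mem_enum //.
exists (Ordinal lt) => /=; by rewrite nth_index // mem_enum.
Qed.

Lemma pg_up n g g' : power_gen_by ops n g -> (g <= g')%N -> power_gen_by ops n g'.
Proof.
move=> [gens Hg] le; pose x0 : {ffun 'I_n -> A} := [ffun _ => a0].
exists (fun i : 'I_g' => if insub (val i) is Some j then gens j else x0) => x.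
apply: gen_mono (Hg x) => y [j <-]; exists (widen_ord le j) => /=.
by rewrite valK.
Qed.

Lemma pg_down n m g : power_gen_by ops n g -> (m <= n)%N -> power_gen_by ops m g.
Proof.
move=> [gens Hg] le.
pose proj (x : {ffun 'I_n -> A}) : {ffun 'I_m -> A} := [ffun i => x (widen_ord le i)].
exists (fun i => proj (gens i)) => z.
have key : forall y, generated ops (fun x => exists i, gens i = x) y ->
   generated ops (fun x => exists i, proj (gens i) = x) (proj y).
  move=> y; elim => [y' [i <-]|f xs _ IH]; first by apply: gen_base; exists i.
  have -> : proj [ffun j => ops (xs^~ j)] = [ffun j => ops (fun i => proj (xs i) j)].
    apply/ffunP => j; rewrite /proj !ffunE; congr (ops _).
    by apply: functional_extensionality => i; rewrite ffunE.
  exact: (@gen_op _ _ _ ops _ _ f (fun i => proj (xs i))).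
pose y : {ffun 'I_n -> A} := [ffun j => if insub (val j) is Some k then z k else a0].
have -> : z = proj y by apply/ffunP => k; rewrite !ffunE /= valK.
exact: key.
Qed.

Lemma d_spec n : (1 < #|A|)%N ->
  power_gen_by ops n (d_A ops n) /\ forall g, power_gen_by ops n g -> (d_A ops n <= g)%N.
Proof.
move=> _; rewrite /d_A.
apply: (epsilon_spec (inhabits 0%N) (fun g => power_gen_by ops n g /\ forall g', power_gen_by ops n g' -> (g <= g')%N)).
apply: (@least_ex (power_gen_by ops n) (#|A| ^ n)); exact: pg_all.
Qed.

Lemma h_spec g : (1 < #|A|)%N -> (0 < g)%N ->
  power_gen_by ops (h_A ops g) g /\ forall n, power_gen_by ops n g -> (n <= h_A ops g)%N.
Proof.
move=> A1 g0; rewrite /h_A.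
apply: (epsilon_spec (inhabits 0%N) (fun n => power_gen_by ops n g /\ forall n', power_gen_by ops n' g -> (n' <= n)%N)).
apply: (@max_ex (fun n => power_gen_by ops n g) (#|A| ^ g) 0).
  by apply: pg_all; rewrite expn0.
move=> k; exact: pg_card.
Qed.

Lemma galois_d n g : (1 < #|A|)%N -> (d_A ops n <= g)%N <-> power_gen_by ops n g.
Proof.
move=> A1; have [P1 P2] := d_spec n A1; split; last exact: P2.
exact: pg_up.
Qed.

Lemma galois_h n g : (1 < #|A|)%N -> (0 < g)%N -> (n <= h_A ops g)%N <-> power_gen_by ops n g.
Proof.
move=> A1 g0; have [P1 P2] := h_spec A1 g0; split; last exact: P2.
exact: pg_down.
Qed.

Lemma dh_galois n g : (1 < #|A|)%N -> (0 < g)%N -> (d_A ops n <= g)%N <-> (n <= h_A ops g)%N.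
Proof. move=> A1 g0; rewrite galois_d // galois_h //. Qed.

End AlgS.

Local Open Scope R_scope.

Lemma leR (m n : nat) : (m <= n)%N -> INR m <= INR n.
Proof. by move/leP; apply: le_INR. Qed.
Lemma Rle_nat (m n : nat) : INR m <= INR n -> (m <= n)%N.
Proof. by move/INR_le/leP. Qed.
Lemma Rlt_nat (m n : nat) : INR m < INR n -> (m < n)%N.
Proof. by move/INR_lt/ltP. Qed.
Lemma INR_expn (m k : nat) : INR (m ^ k)%N = INR m ^ k.
Proof. elim: k => [|k IH] //=; rewrite expnS mult_INR IH //. Qed.

Lemma ln_le' x y : 0 < x -> x <= y -> ln x <= ln y.
Proof. move=> x0 [xy|<-]; [left; exact: ln_increasing| lra]. Qed.
Lemma exp_le' x y : x <= y -> exp x <= exp y.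
Proof. move=> [xy|<-]; [left; exact: exp_increasing| lra]. Qed.
Lemma ln_le_inv' x y : 0 < x -> 0 < y -> ln x <= ln y -> x <= y.
Proof.
move=> x0 y0 h; case: (Rle_or_lt x y) => // yx.
have := ln_increasing _ _ y0 yx; lra.
Qed.
Lemma ln_nonneg n : (0 < n)%N -> 0 <= ln (INR n).
Proof.
move=> n0; rewrite -ln_1; apply: ln_le'; first lra.
by have := leR n0.
Qed.
Lemma ln2_pos : 0 < ln 2.
Proof. have := ln_lt_2; lra. Qed.
Lemma ln2_lt1 : ln 2 < 1.
Proof.
have h : 2 < exp 1 by have := exp_ineq1 1 ltac:(lra); lra.
have e := ln_exp 1; rewrite -[X in _ < X]e; apply: ln_increasing; lra.
Qed.
Lemma INR_pos n : (0 < n)%N -> 0 < INR n.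
Proof. move=> n0; have := leR n0; simpl; lra. Qed.

Lemma floor_ex y : 0 <= y -> exists k : nat, INR k <= y /\ y < INR k + 1.
Proof.
move=> y0.
have [K HK] : exists K : nat, y < INR K.
  have [K HK] := INR_archimed 1 (y) ltac:(lra); exists K; lra.
have [m [Hm Mm]] := @least_ex (fun k => y < INR k) K HK.
case: m Hm Mm => [|k] Hm Mm; first by simpl in Hm; lra.
exists k; rewrite S_INR in Hm; split => //.
case: (Rle_or_lt (INR k) y) => // lt.
by have := Mm k lt; rewrite ltnn.
Qed.

Lemma Rpower2E y : Rpower 2 y = exp (y * ln 2).
Proof. by []. Qed.

Lemma Rpow_nonneg (m : nat) y : INR m = Rpower 2 y -> 0 <= y.
Proof.
rewrite Rpower2E => e; case: (Rle_or_lt 0 y) => // y0.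
have h1 : exp (y * ln 2) < 1.
  rewrite -exp_0; apply: exp_increasing; have := ln2_pos; nra.
have h2 := exp_pos (y * ln 2).
case: m e => [|m] e; first by simpl in e; lra.
rewrite S_INR in e; have := pos_INR m; lra.
Qed.

Lemma Rpow_ln (m : nat) : (0 < m)%N -> Rpower 2 (ln (INR m) / ln 2) = INR m.
Proof.
move=> m0; rewrite Rpower2E.
have -> : ln (INR m) / ln 2 * ln 2 = ln (INR m) by field; have := ln2_pos; lra.
by rewrite exp_ln //; apply: INR_pos.
Qed.

Local Open Scope R_scope.

Section Asym.
Variables (p : nat) (d h : nat -> nat).
Hypothesis p2 : (1 < p)%N.
Hypothesis Hd1 : forall n, (0 < n)%N -> (n <= p ^ d n)%N.
Hypothesis Hd2 : forall n, (0 < n)%N -> (d n <= p ^ n)%N.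
Hypothesis Hh1 : forall g, (0 < g)%N -> (g < p ^ (h g).+1)%N.
Hypothesis Hh2 : forall g, (0 < g)%N -> (h g <= p ^ g)%N.
Hypothesis Hg : forall n g, (0 < g)%N -> (d n <= g)%N <-> (n <= h g)%N.

Local Notation lp := (ln (INR p)).
Lemma lp_pos : 0 < lp.
Proof.
rewrite -ln_1; apply: ln_increasing; first lra.
have := leR p2; simpl; lra.
Qed.

Lemma p_pos : 0 < INR p.
Proof. apply: INR_pos; exact: ltnW. Qed.

Lemma ln_pexp k : ln (INR (p ^ k)) = INR k * lp.
Proof. by rewrite INR_expn ln_pow //; exact: p_pos. Qed.

Lemma Rd n : (0 < n)%N -> ln (INR n) <= INR (d n) * lp.
Proof.
move=> n0; rewrite -ln_pexp; apply: ln_le'; first exact: INR_pos.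
exact/leR/Hd1.
Qed.

Lemma d_ge1 n : (1 < n)%N -> (0 < d n)%N.
Proof.
move=> n1; have := Hd1 (ltnW n1); case: (d n) => // ; rewrite expn0 => h1.
by have := leq_trans n1 h1.
Qed.

Lemma Rd3 n : (1 < n)%N -> ln (INR (d n)) <= INR n * lp.
Proof.
move=> n1; rewrite -ln_pexp; apply: ln_le'; first exact/INR_pos/d_ge1.
exact/leR/Hd2/ltnW.
Qed.

Lemma Rh g : (0 < g)%N -> ln (INR g) < (INR (h g) + 1) * lp.
Proof.
move=> g0; rewrite -S_INR -ln_pexp; apply: ln_increasing; first exact: INR_pos.
have := Hh1 g0; move=> /leR; rewrite S_INR => hh.
have := leR (leqnn (p ^ (h g).+1)); lra.
Qed.

Lemma h_ge1 g : (p <= g)%N -> (0 < h g)%N.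
Proof.
move=> pg; have g0 : (0 < g)%N by apply: leq_trans pg; exact: ltnW.
have := Hh1 g0; case: (h g) => //; rewrite expn1 => gp.
by have := leq_trans gp pg; rewrite ltnn.
Qed.

Lemma Rh3 g : (p <= g)%N -> ln (INR (h g)) <= INR g * lp.
Proof.
move=> pg; have g0 : (0 < g)%N by apply: leq_trans pg; exact: ltnW.
rewrite -ln_pexp; apply: ln_le'; first exact/INR_pos/h_ge1.
exact/leR/Hh2.
Qed.

Lemma expO_gen (f : nat -> nat) (N : R) : 0 < N ->
  (forall x, N < INR x -> (0 < f x)%N /\ ln (INR (f x)) <= INR x * lp) ->
  exp_bigO (natR f).
Proof.
move=> N0 Hf; exists (fun x => ln (INR (f x)) / ln 2); split; last first.
  exists N; split => // x Nx; rewrite /natR Rpow_ln //; exact: (Hf x Nx).1.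
exists (lp / ln 2), N; split; first by apply: Rdiv_lt_0_compat; [exact: lp_pos|exact: ln2_pos].
split => // x Nx; have [f0 fl] := Hf x Nx; rewrite /idR.
have l0 := ln_nonneg f0; have l2 := ln2_pos.
rewrite Rabs_pos_eq; last by apply: Rmult_le_pos => //; left; apply: Rinv_0_lt_compat.
rewrite Rabs_pos_eq; last exact: pos_INR.
rewrite /Rdiv; have := Rinv_0_lt_compat _ l2; nra.
Qed.

Lemma part_dO : exp_bigO (natR d).
Proof.
apply: (@expO_gen d 1); first lra.
move=> x x1; have x1' : (1 < x)%N by apply: Rlt_nat; simpl; lra.
by split; [exact: d_ge1 | exact: Rd3].
Qed.

Lemma part_hO : exp_bigO (natR h).
Proof.
apply: (@expO_gen h (INR p)); first exact: p_pos.
move=> x x1; have x1' : (p <= x)%N by apply: ltnW; apply: Rlt_nat.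
by split; [exact: h_ge1 | exact: Rh3].
Qed.

Lemma part_dOm : bigOmega (natR d) logR.
Proof.
exists (/ lp), 1; split; first exact/Rinv_0_lt_compat/lp_pos.
split; first lra.
move=> x x1; have x1' : (0 < x)%N by apply: Rlt_nat; simpl; lra.
rewrite /natR /logR Rabs_pos_eq ?Rabs_pos_eq; [|exact: ln_nonneg|exact: pos_INR].
apply: Rle_ge.
have : / lp * ln (INR x) <= / lp * (INR (d x) * lp).
  apply: Rmult_le_compat_l; [left; exact/Rinv_0_lt_compat/lp_pos| exact: Rd].
have -> : / lp * (INR (d x) * lp) = INR (d x) by field; have := lp_pos; lra.
done.
Qed.

Lemma part_hOm : bigOmega (natR h) logR.
Proof.
exists (/ (2 * lp)), (INR p); split; first by apply: Rinv_0_lt_compat; have := lp_pos; lra.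
split; first exact: p_pos.
move=> x x1; have x1' : (p <= x)%N by apply: ltnW; apply: Rlt_nat.
have x0 : (0 < x)%N by apply: leq_trans x1'; exact: ltnW.
rewrite /natR /logR Rabs_pos_eq ?Rabs_pos_eq; [|exact: ln_nonneg|exact: pos_INR].
have := Rh x0; have := leR (h_ge1 x1'); simpl => h1 hl.
apply: Rle_ge.
have : / (2 * lp) * ln (INR x) <= / (2 * lp) * ((INR (h x) + 1) * lp).
  apply: Rmult_le_compat_l; [left; apply: Rinv_0_lt_compat; have := lp_pos; lra| lra].
have -> : / (2 * lp) * ((INR (h x) + 1) * lp) = (INR (h x) + 1) / 2 by field; have := lp_pos; lra.
lra.
Qed.


Lemma mul_inv_le c a b : 0 < c -> c * a <= b -> a <= / c * b.
Proof.
move=> c0 h1; have -> : a = / c * (c * a) by field; lra.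
apply: Rmult_le_compat_l => //; left; exact: Rinv_0_lt_compat.
Qed.

Lemma absN (n : nat) : Rabs (INR n) = INR n.
Proof. exact/Rabs_pos_eq/pos_INR. Qed.

Lemma small_g (N : R) : 0 < N -> exists B, 0 < B /\
  forall n g, B < INR n -> INR g <= N -> (0 < g)%N -> ~ (n <= h g)%N.
Proof.
move=> N0; have [K [HK1 HK2]] := floor_ex (Rlt_le _ _ N0).
exists (INR (p ^ K) + 1); split; first by have := pos_INR (p ^ K); lra.
move=> n g Bn gN g0 ng.
have gK : (g <= K)%N by rewrite -ltnS; apply: Rlt_nat; rewrite S_INR; lra.
have := leq_trans ng (leq_trans (Hh2 g0) (leq_pexp2l (ltnW p2) gK)).
move/leR; lra.
Qed.

Lemma e2b1 : bigOmega (natR d) idR -> bigO (natR h) idR.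
Proof.
move=> [c [N [c0 [N0 H]]]]; exists (/ c + 1), (N + 1); split.
  by have := Rinv_0_lt_compat _ c0; lra.
split; first lra.
move=> g gN; have g0 : (0 < g)%N by apply: Rlt_nat; simpl; lra.
have dn : (d (h g) <= g)%N by apply/Hg.
rewrite /natR /idR !absN.
have ic := Rinv_0_lt_compat _ c0.
case: (Rle_or_lt (INR (h g)) N) => hN.
  have := pos_INR g; nra.
have := H _ hN; rewrite /natR /idR !absN => /Rge_le cd.
have := leR dn => dg.
have := mul_inv_le c0 (Rle_trans _ _ _ cd dg); have := pos_INR g; nra.
Qed.

Lemma e2b2 : bigO (natR h) idR -> bigOmega (natR d) idR.
Proof.
move=> [M [N [M0 [N0 H]]]].
have [B [B0 HB]] := small_g N0.
exists (/ M), (B + 1); split; first exact: Rinv_0_lt_compat.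
split; first lra.
move=> n nB; rewrite /natR /idR !absN.
have n1 : (1 < n)%N by apply: Rlt_nat; have := pos_INR (h 0); simpl; lra.
have g0 := d_ge1 n1.
have nh : (n <= h (d n))%N by apply/Hg.
case: (Rle_or_lt (INR (d n)) N) => gN.
  by exfalso; apply: (HB n (d n)) => //; lra.
have := H _ gN; rewrite /natR /idR !absN => hM.
have := Rle_trans _ _ _ (leR nh) hM.
move=> nM; apply: Rle_ge.
have ic := Rinv_0_lt_compat _ M0.
apply: (Rle_trans _ (/ M * (M * INR (d n)))).
  apply: Rmult_le_compat_l => //; lra.
right; field; lra.
Qed.


Lemma e2a1 : bigO (natR d) idR -> bigOmega (natR h) idR.
Proof.
move=> [M [N [M0 [N0 H]]]]; exists (/ (2 * M)), (M * (N + 3) + 1); split.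
  by apply: Rinv_0_lt_compat; lra.
split; first nra.
move=> g gN; rewrite /natR /idR !absN.
have g0 : (0 < g)%N by apply: Rlt_nat; simpl; nra.
set t := INR g / M.
have gt : INR g = M * t by rewrite /t; field; lra.
have tN : N + 3 < t by nra.
have [k [k1 k2]] := floor_ex (ltac:(lra) : 0 <= t).
have kN : N < INR k by lra.
have := H k kN; rewrite /natR /idR !absN => dk.
have dkg : (d k <= g)%N.
  apply: Rle_nat; rewrite gt; apply: (Rle_trans _ _ _ dk); apply: Rmult_le_compat_l; lra.
have := leR (proj1 (Hg k g0) dkg) => kh.
apply: Rle_ge; rewrite gt.
have -> : / (2 * M) * (M * t) = t / 2 by field; lra.
lra.
Qed.

Lemma e2a2 : bigOmega (natR h) idR -> bigO (natR d) idR.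
Proof.
move=> [c [N [c0 [N0 H]]]]; exists (2 / c), (c * (N + 1) + 1); split.
  by apply: Rdiv_lt_0_compat; lra.
split; first nra.
move=> n nN; rewrite /natR /idR !absN.
set t := INR n / c.
have nt : INR n = c * t by rewrite /t; field; lra.
have tN : N + 1 < t by nra.
have [k [k1 k2]] := floor_ex (ltac:(lra) : 0 <= t).
have gN : N < INR k.+1 by rewrite S_INR; lra.
have := H _ gN; rewrite /natR /idR !absN S_INR => /Rge_le hg.
have nh : (n <= h k.+1)%N.
  apply: Rle_nat; apply: Rle_trans hg; rewrite nt.
  apply: Rmult_le_compat_l; lra.
have := leR (proj2 (Hg n (ltn0Sn k)) nh); rewrite S_INR => dn.
rewrite nt; have -> : 2 / c * (c * t) = 2 * t by field; lra.
lra.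
Qed.


Lemma inv_mul_le c a b : 0 < c -> a <= c * b -> / c * a <= b.
Proof.
move=> c0 h1; apply: (Rle_trans _ (/ c * (c * b))).
  apply: Rmult_le_compat_l => //; left; exact: Rinv_0_lt_compat.
right; field; lra.
Qed.

Lemma e11 : bigO (natR d) logR -> exp_bigOmega (natR h).
Proof.
move=> [M [N [M0 [N0 H]]]].
exists (fun x => ln (INR (h x)) / ln 2); split; last first.
  exists (INR p); split; first exact: p_pos.
  move=> x xp; rewrite /natR Rpow_ln //; apply: h_ge1; apply: ltnW; exact: Rlt_nat.
have l2 := ln2_pos; have l21 := ln2_lt1.
exists (/ (2 * M * ln 2)), (M * (N + 3)); split.
  by apply: Rinv_0_lt_compat; nra.
split; first nra.
move=> g gN; rewrite /idR absN.
have g0 : (0 < g)%N by apply: Rlt_nat; simpl; nra.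
set t := INR g / M.
have gt : INR g = M * t by rewrite /t; field; lra.
have tN : N + 3 < t by nra.
have ey := exp_ineq1_le t.
have [k [k1 k2]] := floor_ex (ltac:(have := exp_pos t; lra) : 0 <= exp t).
have kN : N < INR k by lra.
have k0 : (0 < k)%N by apply: Rlt_nat; simpl; lra.
have kpos := INR_pos k0.
have lk : ln (INR k) <= t by rewrite -[X in _ <= X]ln_exp; apply: ln_le'.
have := H k kN; rewrite /natR /logR absN (Rabs_pos_eq _ (ln_nonneg k0)) => dk.
have dkg : (d k <= g)%N.
  apply: Rle_nat; rewrite gt; apply: (Rle_trans _ _ _ dk); apply: Rmult_le_compat_l; lra.
have kh := proj1 (Hg k g0) dkg.
have hpos : 0 < INR (h g) by apply: INR_pos; exact: leq_trans kh.
have lkh : ln (INR k) <= ln (INR (h g)) by apply: ln_le' => //; exact: leR.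
have k1' : 1 <= INR k by have := leR k0; simpl; lra.
have tl : t <= ln 2 + ln (INR k).
  rewrite -ln_mult; [|lra|lra].
  rewrite -[X in X <= _]ln_exp; apply: ln_le'; [exact: exp_pos| lra].
rewrite Rabs_pos_eq; last by apply: Rmult_le_pos; [lra| left; apply: Rinv_0_lt_compat].
apply: Rle_ge; rewrite gt.
have -> : / (2 * M * ln 2) * (M * t) = t / 2 * / ln 2 by field; lra.
apply: Rmult_le_compat_r; [left; exact: Rinv_0_lt_compat| lra].
Qed.

Lemma e12 : exp_bigOmega (natR h) -> bigO (natR d) logR.
Proof.
move=> [G [[c [N1 [c0 [N10 HG]]]] [N2 [N20 HE]]]].
have l2 := ln2_pos.
set K := (N1 + N2 + 1) * c * ln 2.
have K0 : 0 < K by rewrite /K; apply: Rmult_lt_0_compat => //; nra.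
exists (2 / (c * ln 2)), (exp K + 1); split.
  by apply: Rdiv_lt_0_compat; nra.
split; first by have := exp_pos K; lra.
move=> n nK; rewrite /natR /logR absN.
have n0 : (0 < n)%N by apply: Rlt_nat; have := exp_pos K; simpl; lra.
have lnK : K < ln (INR n).
  rewrite -[X in X < _]ln_exp; apply: ln_increasing; [exact: exp_pos| lra].
rewrite Rabs_pos_eq; last by have := ln_nonneg n0.
set t := ln (INR n) / (c * ln 2).
have nt : ln (INR n) = c * ln 2 * t by rewrite /t; field; nra.
have cl : 0 < c * ln 2 by nra.
have tN : N1 + N2 + 1 < t.
  have : c * ln 2 * (N1 + N2 + 1) < c * ln 2 * t by rewrite -nt /K in lnK *; nra.
  move=> hh; nra.
have [k [k1 k2]] := floor_ex (ltac:(lra) : 0 <= t).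
have g1 : N1 < INR k.+1 by rewrite S_INR; lra.
have g2 : N2 < INR k.+1 by rewrite S_INR; lra.
have e := HE _ g2; have Gp := @Rpow_nonneg _ _ e.
have := HG _ g1; rewrite /idR absN Rabs_pos_eq // S_INR => /Rge_le cg.
have nh : (n <= h k.+1)%N.
  apply: Rle_nat; rewrite /natR in e; rewrite e Rpower2E.
  rewrite -(exp_ln (INR n)); last exact: INR_pos.
  apply: exp_le'; rewrite nt.
  have : c * t <= G k.+1 by nra.
  move=> hh; nra.
have := leR (proj2 (Hg n (ltn0Sn k)) nh); rewrite S_INR => dn.
rewrite nt; have -> : 2 / (c * ln 2) * (c * ln 2 * t) = 2 * t by field; lra.
lra.
Qed.

Lemma e31 : exp_bigOmega (natR d) -> bigO (natR h) logR.
Proof.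
move=> [G [[c [N1 [c0 [N10 HG]]]] [N2 [N20 HE]]]].
have l2 := ln2_pos.
have cl : 0 < c * ln 2 by nra.
have ic := Rinv_0_lt_compat _ cl.
exists (/ (c * ln 2) + 1), (exp (N1 + N2) + 1); split; first lra.
split; first by have := exp_pos (N1 + N2); lra.
move=> g gN; rewrite /natR /logR absN.
have g0 : (0 < g)%N by apply: Rlt_nat; have := exp_pos (N1 + N2); simpl; lra.
have lnK : N1 + N2 < ln (INR g).
  rewrite -[X in X < _]ln_exp; apply: ln_increasing; [exact: exp_pos| lra].
rewrite Rabs_pos_eq; last by have := ln_nonneg g0.
have dn : (d (h g) <= g)%N by apply/Hg.
case: (Rle_or_lt (INR (h g)) (N1 + N2)) => hN.
  nra.
have n1 : N1 < INR (h g) by lra.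
have n2 : N2 < INR (h g) by lra.
have e := HE _ n2; have Gp := @Rpow_nonneg _ _ e.
have := HG _ n1; rewrite /idR absN Rabs_pos_eq // => /Rge_le cg.
have lg : G (h g) * ln 2 <= ln (INR g).
  rewrite -[X in X <= _]ln_exp; apply: ln_le'; first exact: exp_pos.
  rewrite -Rpower2E; rewrite /natR in e; rewrite -e; exact: leR.
have : (c * ln 2) * INR (h g) <= ln (INR g) by nra.
move=> hh0; have hh := mul_inv_le cl hh0.
have := ln_nonneg g0; nra.
Qed.

Lemma e32 : bigO (natR h) logR -> exp_bigOmega (natR d).
Proof.
move=> [M [N [M0 [N0 H]]]].
have l2 := ln2_pos.
have [B [B0 HB]] := small_g N0.
exists (fun x => ln (INR (d x)) / ln 2); split; last first.
  exists 1; split; first lra.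
  move=> x x1; rewrite /natR Rpow_ln //; apply: d_ge1; apply: Rlt_nat; simpl; lra.
exists (/ (M * ln 2)), (B + 1); split.
  by apply: Rinv_0_lt_compat; nra.
split; first lra.
move=> n nB; rewrite /idR absN.
have n1 : (1 < n)%N by apply: Rlt_nat; simpl; lra.
have g0 := d_ge1 n1.
have nh : (n <= h (d n))%N by apply/Hg.
case: (Rle_or_lt (INR (d n)) N) => gN.
  by exfalso; apply: (HB n (d n)) => //; lra.
have := H _ gN; rewrite /natR /logR absN (Rabs_pos_eq _ (ln_nonneg g0)) => hM.
have nM := Rle_trans _ _ _ (leR nh) hM.
have := inv_mul_le M0 nM => hh.
have lg := ln_nonneg g0.
rewrite Rabs_pos_eq; last by apply: Rmult_le_pos => //; left; apply: Rinv_0_lt_compat.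
apply: Rle_ge.
have -> : / (M * ln 2) * INR n = / M * INR n * / ln 2 by field; lra.
apply: Rmult_le_compat_r => //; left; exact: Rinv_0_lt_compat.
Qed.


Lemma asym_all :
  (bigOmega (natR d) logR /\ exp_bigO (natR d) /\
   bigOmega (natR h) logR /\ exp_bigO (natR h)) /\
  (bigO (natR d) logR <-> exp_bigOmega (natR h)) /\
  ((bigO (natR d) idR <-> bigOmega (natR h) idR) /\
   (bigOmega (natR d) idR <-> bigO (natR h) idR)) /\
  (exp_bigOmega (natR d) <-> bigO (natR h) logR).
Proof using p2 Hd1 Hd2 Hh1 Hh2 Hg.
split; first by split; [exact: part_dOm|split; [exact: part_dO|split; [exact: part_hOm|exact: part_hO]]].
split; first by split; [exact: e11|exact: e12].
split; first by split; split; [exact: e2a1|exact: e2a2|exact: e2b1|exact: e2b2].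
by split; [exact: e31|exact: e32].
Qed.

End Asym.

Close Scope R_scope.

Theorem theorem2p2 (A : finType) (F : Type) (ar : F -> nat)
    (ops : forall f : F, ('I_(ar f) -> A) -> A) :
  (1 < #|A|)%N ->
  (forall n : nat, (0 < n)%N ->
     (up_log #|A| n <= d_A ops n <= #|A| ^ n)%N /\
     (trunc_log #|A| n <= h_A ops n <= #|A| ^ n)%N) /\
  (bigOmega (natR (d_A ops)) logR /\ exp_bigO (natR (d_A ops)) /\
   bigOmega (natR (h_A ops)) logR /\ exp_bigO (natR (h_A ops))) /\
  (bigO (natR (d_A ops)) logR <-> exp_bigOmega (natR (h_A ops))) /\
  ((bigO (natR (d_A ops)) idR <-> bigOmega (natR (h_A ops)) idR) /\
   (bigOmega (natR (d_A ops)) idR <-> bigO (natR (h_A ops)) idR)) /\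
  (exp_bigOmega (natR (d_A ops)) <-> bigO (natR (h_A ops)) logR).
Proof.
move=> A1.
have [a0 _] : exists a : A, True by case/card_gt1P: A1 => [x [_ _]]; exists x.
have Hd1 : forall n, (0 < n)%N -> (n <= #|A| ^ d_A ops n)%N.
  move=> n _; exact: (pg_card A1 (d_spec ops a0 n A1).1).
have Hd2 : forall n, (0 < n)%N -> (d_A ops n <= #|A| ^ n)%N.
  move=> n _; apply: (d_spec ops a0 n A1).2; exact: (pg_all ops a0 (leqnn _)).
have Ht : forall g, (0 < g)%N -> (trunc_log #|A| g <= h_A ops g)%N.
  move=> g g0; apply/(galois_h ops a0 _ A1 g0); apply: (pg_all ops a0); exact: trunc_logP.
have Hh1 : forall g, (0 < g)%N -> (g < #|A| ^ (h_A ops g).+1)%N.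
  move=> g g0; apply: (leq_trans (trunc_log_ltn g A1)).
  by apply: leq_pexp2l; [exact: ltnW | rewrite ltnS; exact: Ht].
have Hh2 : forall g, (0 < g)%N -> (h_A ops g <= #|A| ^ g)%N.
  move=> g g0; exact: (pg_card A1 (h_spec ops a0 A1 g0).1).
have Hg : forall n g, (0 < g)%N -> (d_A ops n <= g)%N <-> (n <= h_A ops g)%N.
  move=> n g g0; exact: (dh_galois ops a0 n A1 g0).
split; last exact: (asym_all A1 Hd1 Hd2 Hh1 Hh2 Hg).
move=> n n0; split; apply/andP; split.
- apply: up_log_min => //; exact: Hd1.
- exact: Hd2.
- exact: Ht.
- exact: Hh2.
Qed.
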